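(* Let $P$ be a normal $p$-subgroup of a finite group $G$ with $|P|>p$ and $P\cap\Phi(G)=1$. Let $\tau$ be an inductive $\Phi$-quasiregular subgroup functor, and suppose every maximal subgroup of $P$ is $\mathfrak U_\tau$-supplemented in $G$. Then some maximal subgroup of $P$ is normal in $G$.
   Context: All groups are finite; $\mathfrak U$ is the class of supersoluble groups; $\Phi(G)$ is the Frattini subgroup. For a class $\mathfrak F$, a chief factor $H/K$ of $G$ is $\mathfrak F$-central if $(H/K)\rtimes(G/C_G(H/K))\in\mathfrak F$; $Z_{\mathfrak F}(G)$ is the product of all normal subgroups $N$ of $G$ such that every chief factor of $G$ below $N$ is $\mathfrak F$-central. For $K\le H\le G$, the pair $(K,H)$ satisfies the $\mathfrak F$-supplement condition in $G$ if there is $T\le G$ with $HT=G$ and $H\cap T\subseteq KZ_{\mathfrak F}(T)$. A subgroup functor $\tau$ assigns to each group $G$ a set $\tau(G)$ of subgroups with $1\in\tau(G)$ and $\theta(\tau(G))=\tau(\theta(G))$ for all isomorphisms $\theta$; members are $\tau$-subgroups. $\tau$ is inductive if $HN/N\in\tau(G/N)$ whenever $H\in\tau(G)$, $N\trianglelefteq G$; $\Phi$-quasiregular if for every primitive group $G$ (a group with a maximal subgroup of trivial core), whenever $H\in\tau(G)$ is a $q$-group and $N$ is an abelian minimal normal subgroup of $G$, $|G:N_G(H\cap N)|$ is a power of $q$. With $H_G$ the core of $H$, $H$ is $\mathfrak F_\tau$-supplemented in $G$ if for some $\tau$-subgroup $\bar S$ of $G/H_G$ with $\bar S\le H/H_G$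 the pair $(\bar S,H/H_G)$ satisfies the $\mathfrak F$-supplement condition in $G/H_G$. *)

(* Defs.v *)
From HB Require Import structures.
From mathcomp Require Import all_boot all_fingroup all_solvable.
From Stdlib Require Import ClassicalEpsilon.

Set Implicit Arguments.
Unset Strict Implicit.
Unset Printing Implicit Defensive.

Import GroupScope.

Definition pbool (P : Prop) : bool :=
  if excluded_middle_informative P then true else false.

Definition group_class := forall gT : finGroupType, {set gT} -> Prop.

Definition supersoluble : group_class :=
  fun gT (G : {set gT}) =>
  exists (n : nat) (f : nat -> {group gT}),
    [/\ f 0 :=: 1, f n :=: G,
        forall i, i < n -> f i <| G
      & forall i, i < n -> f i \subset f i.+1 /\ cyclic (f i.+1 / f i)].

Lemma section_acts (gT : finGroupType) (G H K : {group gT}) :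
  G \subset 'N(K) -> G \subset 'N(H) -> {acts G, on group (H / K) | 'Q}.
Proof.
move=> nKG nHG; split; first exact: actsQ.
exact: quotientS (subsetT H).
Qed.

(* H/K is F-central in G : (H/K) x| (G / C_G(H/K)) belongs to F, where the
   semidirect product is the external one for the conjugation action of
   G / C_G(H/K) on H/K, and C_G(H/K) is the kernel of the action of G on H/K. *)
Definition Fcentral (F : group_class) (gT : finGroupType) (G H K : {group gT})
  : Prop :=
  forall (nKG : G \subset 'N(K)) (nHG : G \subset 'N(H)),
    let to := <[section_acts nKG nHG]>%gact in
    let C := 'C(H / K | to)%G in
    let tom := (to %% C)%gact in
    F _ [set: sdprod_by tom].

(* Z_F(G): product of all normal subgroups N of G such that every chief
   factor H/K of G with H <= N is F-central. (chief_factor G K H means H/K is a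
   chief factor of G.) *)
Definition ZF (F : group_class) (gT : finGroupType) (G : {group gT}) : {set gT} :=
  << \bigcup_(N : {group gT} | (N <| G) &&
        pbool (forall H K : {group gT},
                 chief_factor G K H -> H \subset N -> Fcentral F G H K)) N >>.

Definition Fsupp_cond (F : group_class) (gT : finGroupType) (G K H : {group gT})
  : Prop :=
  exists T : {group gT},
    [/\ T \subset G, H * T = G & H :&: T \subset K * ZF F T].

(* subgroup functors; tau gT G H means H is a tau-subgroup of G *)
Definition sfunctor := forall gT : finGroupType, {group gT} -> {group gT} -> Prop.

Definition subgroup_functor (tau : sfunctor) : Prop :=
  [/\ (forall gT (G H : {group gT}), tau gT G H -> H \subset G),
      (forall gT (G : {group gT}), tau gT G 1%G)
    & (forall (gT rT : finGroupType) (G : {group gT})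
              (f : {morphism G >-> rT}), 'injm f ->
         (forall H : {group gT}, tau gT G H -> tau rT (f @* G)%G (f @* H)%G)
         /\ (forall K : {group rT}, tau rT (f @* G)%G K ->
               exists2 H : {group gT}, tau gT G H & K :=: f @* H))].

Definition inductive_functor (tau : sfunctor) : Prop :=
  forall gT (G H N : {group gT}),
    tau gT G H -> N <| G -> tau _ (G / N)%G (H / N)%G.

Definition primitive (gT : finGroupType) (G : {group gT}) : Prop :=
  exists M : {group gT}, maximal M G /\ gcore M G = 1.

Definition Phi_quasiregular (tau : sfunctor) : Prop :=
  forall gT (G H N : {group gT}) (q : nat),
    primitive G -> tau gT G H -> prime q -> q.-group H ->
    minnormal N G -> abelian N ->
    q.-nat #|G : 'N_G(H :&: N)|.

Definition Ftau_supplemented (F : group_class) (tau : sfunctor)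
  (gT : finGroupType) (G H : {group gT}) : Prop :=
  exists S : {group coset_of (gcore H G)},
    [/\ tau _ (G / gcore H G)%G S, S \subset H / gcore H G
      & Fsupp_cond F (G / gcore H G)%G S (H / gcore H G)%G].

(* Main.v *)
Require Import Defs.
From HB Require Import structures.
From mathcomp Require Import all_boot all_fingroup all_solvable.
From Stdlib Require Import ClassicalEpsilon.

Import GroupScope.

Module Helpers.
Set Implicit Arguments.
Unset Strict Implicit.
Unset Printing Implicit Defensive.
Lemma nat_switch (P : nat -> bool) n : P 0 -> ~~ P n ->
  exists i, [/\ i < n, P i & ~~ P i.+1].
Proof.
elim: n => [|n IH] P0 Pn; first by rewrite P0 in Pn.
case Pn': (P n); last first.
  by have [i [lt Pi nPi]] := IH P0 (negbT Pn'); exists i; split=> //; apply: ltnW.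
by exists n; split.
Qed.

Lemma cyc_chief (rT : finGroupType) (G H K : {group rT}) :
  chief_factor G K H -> Fcentral supersoluble G H K -> cyclic (H / K).
Proof.
move=> chf Fc.
have /andP[maxK nsHG] := chf.
have /andP[ltKH nKG] := maxgroupp maxK.
have sKH := proper_sub ltKH.
have nHG := normal_norm nsHG.
have := Fc nKG nHG.
set to := <[_]>%gact; set C := 'C(H / K | to)%G; set tom := (to %% C)%gact.
case=> n [f [f0 fn nf sf]].
have sCG : C \subset G by apply: subsetIl.
have R0E : 'C_(|to)(C) = H / K.
  rewrite gacentE //; apply/eqP; rewrite eqEsubset subsetIl subsetI subxx /=.
  by rewrite -astabCin.
set Rs := sdpair1 tom @* 'C_(|to)(C).
have injS := injm_sdpair1 tom.
have ntRs : Rs != 1.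
  rewrite morphim_injm_eq1 //.
  have R0E' : 'C_(|to)(C)%G :=: H / K := R0E.
  rewrite R0E'; apply: contraTneq ltKH => HK1.
  have nKH : H \subset 'N(K) := subset_trans (normal_sub nsHG) nKG.
  rewrite properE; apply/negP => /andP[_ /negP]; apply.
  by rewrite -(quotient_sub1 nKH) HK1.
have [i [ltin Pi nPi]] : exists i, [/\ i < n, f i :&: Rs == 1 & ~~ (f i.+1 :&: Rs == 1)].
  apply: nat_switch; first by rewrite f0 setI1g.
  by rewrite fn setTI.
have nsRs : Rs <| [set: sdprod_by tom].
  by have [] := sdprod_context (sdprod_sdpair tom).
have nsfi1 : f i.+1 <| [set: sdprod_by tom].
  case: (ltnP i.+1 n) => [/nf // | lenS]; rewrite (_ : i.+1 = n) ?fn ?normalG //.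
  by apply/eqP; rewrite eqn_leq lenS ltin.
have nsfi := nf i ltin.
have [sff cycf] := sf i ltin.
set W := f i.+1 :&: Rs.
have nsW : W <| [set: sdprod_by tom] by apply: normalI.
have cycW : cyclic W.
  have nfiW : W \subset 'N(f i) by rewrite (subset_trans (subsetT _)) ?normal_norm.
  have tiW : f i :&: W = 1.
    by apply/eqP; rewrite -subG1 -(eqP Pi) setIS ?subsetIr.
  rewrite (isog_cyclic (quotient_isog nfiW tiW)).
  by apply: cyclicS cycf; apply: quotientS; apply: subsetIl.
set W0 := sdpair1 tom @*^-1 W.
have sWRs : W \subset Rs by apply: subsetIr.
have W0E : sdpair1 tom @* W0 = W by rewrite morphpreK.
have sW0 : W0 \subset 'C_(|to)(C) by apply: morphpre_sub.
have cycW0 : cyclic W0 by rewrite -(injm_cyclic injS sW0) W0E.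
have ntW0 : W0 != 1.
  apply: contra nPi => /eqP W01; apply/eqP.
  by have := W0E; rewrite W01 morphim1 => W1; exact: (esym W1).
have nW0 : G / C \subset 'N(W0 | tom).
  rewrite astabsEsd //; apply/subsetP => u Gu; apply: mem_morphpre => //.
  by rewrite W0E (subsetP (normal_norm nsW)) ?inE.
have GnC : G \subset 'N(C).
  apply: subset_trans (astab_norm _ _); apply/subsetP => a Ga.
  rewrite !inE Ga; apply/subsetP => x Hx; rewrite inE gact_stable //.
have sW0H : W0 \subset H / K by rewrite -R0E.
have actW0 : forall a x, a \in G -> x \in W0 -> x ^ coset K a \in W0.
  move=> a x Ga W0x.
  have Hx : x \in H / K := subsetP sW0H x W0x.
  have := W0x; rewrite -(astabs_act x (subsetP nW0 _ (mem_quotient C Ga))).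
  rewrite modgactE ?subxx //; last by rewrite inE Ga (subsetP GnC).
  by rewrite /= actbyE // qactJ (subsetP nKG).
have nW0GK : G / K \subset 'N(W0).
  apply/subsetP => _ /morphimP[a Na Ga ->]; rewrite inE.
  apply/subsetP => _ /imsetP[x W0x ->].
  exact: actW0.
have /mingroupP[_ minHK] := chief_factor_minnormal chf.
by rewrite -(minHK W0) ?ntW0.
Qed.
Lemma pboolP (P : Prop) : pbool P -> P.
Proof. by rewrite /pbool; case: excluded_middle_informative. Qed.

Lemma ZF_normal (F : group_class) (rT : finGroupType) (G : {group rT}) :
  ZF F G <| G.
Proof.
rewrite /ZF /normal gen_subG norms_gen ?andbT.
  by apply/bigcupsP => N /andP[/andP[]]. 
by apply: norms_bigcup; apply/bigcapsP => N /andP[/andP[]].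
Qed.

Lemma minnormal_meet (rT : finGroupType) (G P X : {group rT}) :
  minnormal P G -> G \subset 'N(X) -> P :&: X != 1 -> P \subset X.
Proof.
move=> /mingroupP[/andP[ntP nPG] minP'] nXG ntPX.
have := minP' (P :&: X)%G; rewrite ntPX /= normsI // => /(_ isT (subsetIl _ _)).
by move=> <-; apply: subsetIr.
Qed.

Lemma ZF_meet (rT : finGroupType) (G P : {group rT}) p :
  prime p -> p.-group P -> minnormal P G -> P \subset G -> p < #|P| ->
  P :&: ZF supersoluble G = 1.
Proof.
move=> pr_p pP minP sPG ltpP.
have /mingroupP[/andP[ntP nPG] minP'] := minP.
have nsPG : P <| G by rewrite /normal sPG nPG.
have nsZ := ZF_normal supersoluble G.
apply/eqP; apply: contraR ntP => ntPZ.
have sPZ : P \subset ZF supersoluble G.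
  by apply: minnormal_meet minP _ ntPZ; apply: normal_norm.
pose fam := fun N : {group rT} => (N <| G) && pbool (forall H K : {group rT},
   chief_factor G K H -> H \subset N -> Fcentral supersoluble G H K).
have [Y maxY _] : {Y : {group rT} | maxgroup Y (fun Y : {group rT} => (Y <| G) && (P :&: Y == 1)) & 1%G \subset Y}.
  by apply: maxgroup_exists; rewrite normal1 setIg1 eqxx.
have /maxgroupP[/andP[nsYG /eqP tiPY] maxY'] := maxY.
case: (boolP [exists N0 : {group rT}, fam N0 && ~~ (N0 \subset Y)]); last first.
  rewrite negb_exists => /forallP allN.
  have sZY : ZF supersoluble G \subset Y.
    rewrite /ZF gen_subG; apply/bigcupsP => N famN.
    by have := allN N; rewrite /fam famN /= negbK.
  by rewrite -tiPY; apply/eqP; apply/esym/setIidPl; apply: subset_trans sPZ sZY.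
case/existsP => N0 /andP[/andP[nsN0 /pboolP FN0] nsubN0].
have nYG := normal_norm nsYG; have nN0G := normal_norm nsN0.
have sYG := normal_sub nsYG; have sN0G := normal_sub nsN0.
have nYP : P \subset 'N(Y) := subset_trans sPG nYG.
have PYE : P <*> Y = P * Y := norm_joinEl nYP.
have sP_N0Y : P \subset N0 <*> Y.
  apply: minnormal_meet minP _ _; first exact: normal_norm (normalY nsN0 nsYG).
  apply: contra nsubN0 => /eqP ti.
  have := maxY' (N0 <*> Y)%G; rewrite normalY //= ti eqxx /= => /(_ isT (joing_subr _ _)).
  by move=> <-; apply: joing_subl.
set Hc := N0 :&: P <*> Y; set Kc := N0 :&: Y.
have sYPY : Y \subset P <*> Y := joing_subr _ _.
have sKH : Kc \subset Hc by apply: setIS.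
have HcY : Hc * Y = P <*> Y.
  rewrite /Hc setIC group_modr // (setIidPl _) //.
  by rewrite -norm_joinEl ?(subset_trans sN0G) // join_subG sP_N0Y joing_subr.
have HcYi : Hc :&: Y = Kc by rewrite /Hc /Kc -setIA (setIidPr sYPY).
have cardHc : #|Hc| = (#|P| * #|Kc|)%N.
  have := mul_cardG [group of Hc] Y; rewrite /= HcY HcYi PYE.
  have := mul_cardG P Y; rewrite tiPY cards1 muln1 => <-.
  rewrite mulnAC => /eqP; rewrite eqn_mul2r => /orP[/eqP Y0|/eqP //].
  by move: (cardG_gt0 Y); rewrite Y0.
have ntP : P :!=: 1.
  apply/eqP => P1; move: ltpP; rewrite P1 cards1 ltnS leqn0 => /eqP p0.
  by rewrite p0 in pr_p.
have ltKH : Kc \proper Hc.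
  rewrite properEcard sKH cardHc -{1}[#|Kc|]mul1n ltn_mul2r cardG_gt0 /=.
  by rewrite (leq_trans (prime_gt1 pr_p)) // ltnW.
have nsHc : Hc <| G by apply: normalI => //; apply: normalY.
have nsKc : Kc <| G by apply: normalI.
have chf : chief_factor G [group of Kc] [group of Hc].
  rewrite /chief_factor nsHc andbT; apply/maxgroupP; split.
    by rewrite ltKH normal_norm.
  move=> X /andP[ltXH nXG] sKX.
  have sXH := proper_sub ltXH.
  have sXG : X \subset G := subset_trans sXH (normal_sub nsHc).
  have nsX : X <| G by rewrite /normal sXG.
  have XYE : X <*> Y = X * Y := norm_joinEl (subset_trans sXG nYG).
  have sXN0 : X \subset N0 := subset_trans sXH (subsetIl _ _).
  case: (eqVneq (P :&: X <*> Y) 1) => [tiPXY | ntPXY].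
    have sXYPY : X <*> Y \subset P <*> Y.
      by rewrite join_subG sYPY andbT (subset_trans sXH) ?subsetIr.
    have XYY : X <*> Y = Y.
      have := group_modr P (joing_subr X Y); rewrite setIC tiPXY mul1g.
      by rewrite -PYE (setIidPl sXYPY) => E; rewrite {2}E.
    apply/eqP; rewrite eqEsubset sKX andbT subsetI sXN0 /=.
    by rewrite -XYY joing_subl.
  have sPXY : P \subset X <*> Y.
    by apply: minnormal_meet minP _ ntPXY; apply: normal_norm; apply: normalY.
  case/negP: (proper_subn ltXH).
  have := group_modl Y sXN0; rewrite -XYE setIC -/Kc (mulGSid sKX) => ->.
  by rewrite /= setIC setIS // join_subG sPXY joing_subr.
have cyc := cyc_chief chf (FN0 _ _ chf (subsetIl _ _)).
have cardQ : #|Hc / Kc| = #|P|.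
  rewrite card_quotient ?normal_norm ?(normalS sKH (normal_sub nsHc)) //.
  by rewrite -divgS // cardHc mulnK.
have [_ _ /is_abelemP[q pr_q abq]] := minnormal_solvable (chief_factor_minnormal chf)
  (subxx _) (abelian_sol (cyclic_abelian cyc)).
have lelog : logn q #|P| <= 1 by rewrite -cardQ -(abelem_cyclic abq) cyc.
have := card_pgroup (abelem_pgroup abq); rewrite cardQ => cardP.
have [_ pdvd _] := pgroup_pdiv pP ntP.
move: lelog; rewrite leq_eqVlt ltnS leqn0 => /orP[] /eqP lg; rewrite lg in cardP.
  move: pdvd; rewrite cardP expn1 dvdn_prime2 // => /eqP pq.
  by move: ltpP; rewrite cardP expn1 pq ltnn.
by move: ntP; rewrite trivg_card1 cardP.
Qed.

Lemma core_quotient_trivial (rT : finGroupType) (G L : {group rT}) :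
  L \subset G -> gcore (L / gcore L G) (G / gcore L G) = 1.
Proof.
move=> sLG; set X := gcore L G.
have nsXG : X <| G := gcore_normal sLG.
have sXL : X \subset L := gcore_sub L G.
have nsXL : X <| L := normalS sXL sLG nsXG.
set C := gcore _ _.
have nsC : C <| G / X by apply: gcore_normal; apply: quotientS.
have sCL : C \subset L / X := gcore_sub _ _.
set Y := coset X @*^-1 C.
have nsY : Y <| G by rewrite -(quotientGK nsXG) cosetpre_normal.
have sYL : Y \subset L by rewrite -(quotientGK nsXL) cosetpreSK.
have sYX : Y \subset X := gcore_max sYL (normal_norm nsY).
by rewrite -(cosetpreK C) quotientS1.
Qed.

Lemma minnormal_quotient (rT : finGroupType) (G P X : {group rT}) :
  minnormal P G -> P \subset G -> X <| G -> P :&: X = 1 -> minnormal (P / X) (G / X).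
Proof.
move=> minP sPG nsXG tiPX.
have /mingroupP[/andP[ntP nPG] _] := minP.
have nXG := normal_norm nsXG.
apply/mingroupP; split.
  rewrite quotient_norms // andbT; apply: contra ntP => /eqP P1.
  rewrite -subG1 -tiPX subsetI subxx /= -quotient_sub1 ?(subset_trans sPG) //.
  by rewrite P1.
move=> Ys /andP[ntY nYG] sYP.
set Y := coset X @*^-1 Ys.
have nsXP : P \subset 'N(X) := subset_trans sPG nXG.
have nsY : Y <| G.
  by rewrite -(quotientGK nsXG) cosetpre_normal /normal nYG andbT
    (subset_trans sYP) ?quotientS.
have sXY : X \subset Y := sub_cosetpre Ys.
case: (eqVneq (Y :&: P) 1) => [ti | ntYP].
  have sYPX : Y \subset X * P.
    by rewrite -quotientK // cosetpreSK.
  have YX : Y :=: X.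
    have := group_modr P sXY; rewrite ti mul1g => /esym.
    by rewrite (normC nsXP) (setIidPl sYPX).
  by case/negP: ntY; rewrite -(cosetpreK Ys) -/Y YX trivg_quotient.
have sPY : P \subset Y.
  by apply: minnormal_meet minP (normal_norm nsY) _; rewrite setIC.
apply/eqP; rewrite eqEsubset sYP /= -(cosetpreK Ys) quotientS //.
Qed.

Lemma core_contra (tau : sfunctor) (rT : finGroupType) (G P L Hm Q S : {group rT}) p :
  inductive_functor tau -> Phi_quasiregular tau -> prime p ->
  p.-group P -> minnormal P G -> P \subset G -> p < #|P| ->
  maximal L G -> P :&: L = 1 ->
  maximal Hm P -> p.-Sylow(G) Q -> Q \subset 'N(Hm) ->
  tau rT G S -> S \subset Hm -> Fsupp_cond supersoluble G S Hm -> False.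
Proof.
move=> indt qreg pr_p pP minP sPG ltpP maxL tiPL maxHm sylQ nHmQ tauS sSHm.
case=> T [sTG HmT sI].
have /mingroupP[/andP[ntP nPG] minP'] := minP.
have nsPG : P <| G by rewrite /normal sPG.
have [_ _ /is_abelemP[q _ /abelem_abelian abP]] := minnormal_solvable minP (subxx _) (pgroup_sol pP).
have ltHmP : Hm \proper P := maxgroupp maxHm.
have sHmP := proper_sub ltHmP.
have sHmG := subset_trans sHmP sPG.
have sPT : P \subset T.
  suff: P \subset P :&: T by rewrite subsetI => /andP[].
  apply: (minnormal_meet (X := (P :&: T)%G) minP).
    rewrite -HmT mul_subG //.
      by rewrite (subset_trans sHmP) // sub_abelian_norm ?subsetIl.
    by rewrite normsI ?normG ?(subset_trans sTG).
  rewrite /= setIA setIid.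
  apply: contraTneq ltHmP => ti.
  have := group_modl T sHmP; rewrite setIC ti mulg1 HmT (setIidPr sPG) => ->.
  by rewrite proper_irrefl.
have TG : T = G.
  apply: group_inj; apply/eqP; rewrite eqEsubset sTG /= -HmT mul_subG //.
  exact: subset_trans sHmP sPT.
subst T.
have tiPZ := ZF_meet pr_p pP minP sPG ltpP.
have SHm : S = Hm.
  apply: group_inj; have := group_modl (ZF supersoluble G) sSHm.
  rewrite (setIidPl sHmG) in sI.
  rewrite (setIidPr sI) => <-.
  suff -> : ZF supersoluble G :&: Hm = 1 by rewrite mulg1.
  by apply/eqP; rewrite -subG1 -tiPZ setIC setIS.
subst S.
have sLG : L \subset G := proper_sub (maxgroupp maxL).
set X := gcore L G.
have nsXG : X <| G := gcore_normal sLG.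
have sXL : X \subset L := gcore_sub L G.
have nsXL : X <| L := normalS sXL sLG nsXG.
have nXG := normal_norm nsXG.
have tiPX : P :&: X = 1 by apply/eqP; rewrite -subG1 -tiPL setIS.
have primG : Defs.primitive (G / X)%G.
  exists (L / X)%G; split; first by rewrite quotient_maximal.
  exact: core_quotient_trivial.
have tauHX := indt _ _ _ _ tauS nsXG.
have pHX : p.-group (Hm / X) := quotient_pgroup _ (pgroupS sHmP pP).
have minPX := minnormal_quotient minP sPG nsXG tiPX.
have abPX : abelian (P / X) := quotient_abelian _ abP.
have := qreg _ _ _ _ p primG tauHX pr_p pHX minPX abPX.
rewrite /= (setIidPl (quotientS _ sHmP)) => pidx.
have sylQX := quotient_pHall (subset_trans (pHall_sub sylQ) nXG) sylQ.
have /and3P[sQXG _ p'idx] := sylQX.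
have sQN : Q / X \subset 'N_(G / X)(Hm / X) by rewrite subsetI sQXG quotient_norms.
have := pnat_1 pidx (pnat_dvd (indexgS _ sQN) p'idx).
move/eqP; rewrite indexg_eq1 subsetI => /andP[_ nHmX].
have /mingroupP[_ minPX'] := minPX.
have tiXHm : X :&: Hm = 1.
  by apply/eqP; rewrite -subG1 -tiPX [P :&: X]setIC setIS.
have tiXP : X :&: P = 1 by rewrite setIC.
have cHm : #|Hm| = #|Hm / X|
  := card_isog (quotient_isog (subset_trans sHmG nXG) tiXHm).
have cP : #|P| = #|P / X| := card_isog (quotient_isog (subset_trans sPG nXG) tiXP).
have ntHmX : Hm / X != 1.
  rewrite trivg_card1 -cHm; apply/eqP => Hm1.
  have := Lagrange sHmP; rewrite Hm1 mul1n (p_maximal_index pP maxHm) => Pp.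
  by move: ltpP; rewrite -Pp ltnn.
have := minPX' (Hm / X)%G; rewrite ntHmX nHmX /= => /(_ isT (quotientS _ sHmP)).
move=> eqHP; move: ltHmP; rewrite properEcard cHm cP eqHP ltnn andbF.
done.
Qed.

Lemma Phi_normal_sub (gT : finGroupType) (G H : {group gT}) :
  H <| G -> 'Phi(H) \subset 'Phi(G).
Proof.
move=> nsHG; have sHG := normal_sub nsHG.
have nsPhi : 'Phi(H) <| G := char_normal_trans (Phi_char H) nsHG.
apply/bigcapsP => M /predU1P[-> | maxM]; first exact: subset_trans (Phi_sub H) sHG.
apply: contraR (proper_subn (maxgroupp maxM)) => nsub.
have /maxgroupP[_ maxM'] := maxM.
have GE : 'Phi(H) <*> M = G.
  have sJG : 'Phi(H) <*> M \subset G.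
    by rewrite join_subG normal_sub // proper_sub // (maxgroupp maxM).
  apply/eqP; rewrite eqEsubset sJG /=; apply: contraR nsub => nsGJ.
  have := maxM' ('Phi(H) <*> M)%G; rewrite properEneq sJG andbT.
  move=> /(_ _ (joing_subr _ _)) E.
  by rewrite -E ?joing_subl //; apply: contra nsGJ => /eqP ->.
have nPhiM : M \subset 'N('Phi(H)) := subset_trans (proper_sub (maxgroupp maxM)) (normal_norm nsPhi).
have HE : 'Phi(H) * (M :&: H) = H.
  by rewrite group_modl ?Phi_sub // -norm_joinEr // GE (setIidPr sHG).
have : 'Phi(H) <*> (M :&: H) = H.
  rewrite norm_joinEr ?HE //.
  by rewrite (subset_trans (subsetIr _ _)) ?normal_norm ?(char_normal (Phi_char H)).
move/Phi_nongen; rewrite genGid => HMH.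
suff sHM : H \subset M by rewrite (subset_trans (Phi_sub H)) in nsub.
by rewrite -HMH subsetIl.
Qed.
End Helpers.
Import Helpers.

Theorem lemma3p8 (tau : sfunctor) (gT : finGroupType) (G P : {group gT})
  (p : nat) :
  subgroup_functor tau -> inductive_functor tau -> Phi_quasiregular tau ->
  prime p -> p.-group P -> P <| G -> p < #|P| -> P :&: 'Phi(G) = 1 ->
  (forall M : {group gT}, maximal M P -> Ftau_supplemented supersoluble tau G M) ->
  exists M : {group gT}, maximal M P /\ M <| G.
Proof.
move=> _ indt qreg pr_p pP nsPG ltpP tiPPhi Hyp.
have sPG := normal_sub nsPG; have nPG := normal_norm nsPG.
have ntP : P :!=: 1.
  apply/eqP => P1; move: ltpP; rewrite P1 cards1 ltnS leqn0 => /eqP p0.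
  by rewrite p0 in pr_p.
have [N minN sNP] := minnormal_exists ntP nPG.
have /mingroupP[/andP[ntN nNG] minN'] := minN.
have sNG := subset_trans sNP sPG.
have nsNG : N <| G by rewrite /normal sNG.
have pN := pgroupS sNP pP.
have abP : abelian P.
  apply: (abelem_abelian (p := p)); rewrite -trivg_Phi //.
  by rewrite -subG1 -tiPPhi subsetI Phi_sub Phi_normal_sub.
have abN := abelianS sNP abP.
have [L maxL nsubNL] : exists2 L : {group gT}, maximal L G & ~~ (N \subset L).
  apply/exists_inP; apply: contraR ntN => /exists_inPn allL.
  rewrite -subG1 -tiPPhi subsetI sNP; apply/bigcapsP => M /predU1P[-> // | maxM].
  by have := allL M maxM; rewrite negbK.
have ltLG := maxgroupp maxL; have sLG := proper_sub ltLG.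
have nNL : L \subset 'N(N) := subset_trans sLG nNG.
have GNL : N * L = G.
  rewrite -norm_joinEr //; apply/eqP; rewrite eqEsubset join_subG sNG sLG /=.
  apply: contraR nsubNL => nsub.
  have /maxgroupP[_ maxL'] := maxL.
  have := maxL' (N <*> L)%G; rewrite properEneq join_subG sNG sLG andbT.
  move=> /(_ _ (joing_subr _ _)) E.
  by rewrite -E ?joing_subl // andbT; apply: contra nsub => /eqP ->.
have tiNL : N :&: L = 1.
  apply/eqP; apply: contraR nsubNL => ntNL.
  have: N \subset N :&: L.
    apply: (minnormal_meet (X := (N :&: L)%G) minN); last by rewrite /= setIA setIid.
    rewrite -GNL mul_subG //; first by rewrite sub_abelian_norm ?subsetIl.
    by rewrite normsI ?normG.
  by rewrite subsetI => /andP[].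
set D := P :&: L.
have PE : N * D = P by rewrite /D setIC group_modl // GNL (setIidPr sPG).
have nDG : G \subset 'N(D).
  rewrite -GNL mul_subG //; first by rewrite (subset_trans sNP) // sub_abelian_norm ?subsetIl.
  by rewrite normsI ?normG ?(subset_trans sLG).
have nsDG : D <| G by rewrite /normal (subset_trans (subsetIl _ _)) //.
have tiND : N :&: D = 1 by apply/eqP; rewrite -subG1 -tiNL setIS // subsetIr.
have cardP : #|P| = (#|N| * #|D|)%N by rewrite -PE mul_cardG tiND cards1 muln1.
have sDP : D \subset P := subsetIl _ _.
case: (eqVneq #|N| p) => [Np | Nnp].
  exists [group of D]; split => //.
  apply: p_index_maximal => //=.
  by rewrite -divgS // cardP mulnK // Np.
exfalso.
have ltpN : p < #|N|.
  have [_ pdvd _] := pgroup_pdiv pN ntN.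
  by rewrite ltn_neqAle eq_sym Nnp dvdn_leq.
have [Q sylQ] := Sylow_exists p G.
have sNQ : N \subset Q := normal_sub_max_pgroup (Hall_max sylQ) pN nsNG.
have sQG := pHall_sub sylQ.
have ltNQN : [~: N, Q] \proper N.
  apply: nil_comm_properl (pgroup_nil (pHall_pgroup sylQ)) sNQ ntN _.
  by rewrite subsetI subxx (subset_trans sQG).
have [H0 maxH0 sNQH0] : {H0 : {group gT} | maxgroup H0 (fun H : {group gT} =>
    (H \proper N) && ([~: N, Q] \subset H)) & [~: N, Q] \subset H0}.
  by apply: maxgroup_exists; rewrite ltNQN subxx.
have /maxgroupP[/andP[ltH0N _] maxH0'] := maxH0.
have maxH0N : maximal H0 N.
  apply/maxgroupP; split => // X ltXN sH0X.
  by apply: maxH0' => //; rewrite ltXN (subset_trans sNQH0).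
have sH0N := proper_sub ltH0N.
have nH0Q : Q \subset 'N(H0).
  by rewrite -commg_subl (subset_trans (commSg _ sH0N)).
have sH0G : H0 \subset G := subset_trans sH0N sNG.
set M := (H0 <*> D)%G.
have ME : M = H0 * D :> {set gT} := norm_joinEl (subset_trans sH0G nDG).
have tiH0D : H0 :&: D = 1 by apply/eqP; rewrite -subG1 -tiND setSI.
have cardM : #|M| = (#|H0| * #|D|)%N.
  by have := mul_cardG H0 D; rewrite tiH0D cards1 muln1 -ME => ->.
have sMP : M \subset P by rewrite join_subG sDP (subset_trans sH0N).
have sMG := subset_trans sMP sPG.
have cardN : #|N| = (#|H0| * p)%N by rewrite -(p_maximal_index pN maxH0N) Lagrange.
have maxM : maximal M P.
  apply: p_index_maximal => //.
  rewrite -divgS // cardP cardM cardN mulnAC mulKn //.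
  by rewrite muln_gt0 !cardG_gt0.
set C := gcore M G.
have nsC : C <| G := gcore_normal sMG.
have sCM : C \subset M := gcore_sub M G.
have sDC : D \subset C := gcore_max (joing_subr _ _) nDG.
have tiCN : C :&: N = 1.
  apply/eqP; apply: contraR (proper_subn ltH0N) => ntCN.
  have sNCN : N \subset C :&: N.
    apply: (minnormal_meet (X := (C :&: N)%G) minN).
      by rewrite normsI ?normal_norm.
    by rewrite /= setICA setIid.
  apply: subset_trans sNCN _.
  have := group_modl D sH0N; rewrite setIC tiND mulg1 -ME => ->.
  by apply: setSI.
have CE : C = D.
  apply/eqP; rewrite eqEsubset sDC andbT.
  have := group_modr N sDC; rewrite tiCN mul1g PE => ->.
  by rewrite subsetI subxx (subset_trans sCM).
have [S [tauS sSM Fs]] := Hyp M maxM.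
have nCG := normal_norm nsC.
have sCP : C \subset P := subset_trans sCM sMP.
have sCL : C \subset L by rewrite CE subsetIr.
have nsCP : C <| P := normalS sCP sPG nsC.
have nsCM : C <| M := normalS sCM sMG nsC.
have nsCL : C <| L := normalS sCL sLG nsC.
have PCE : P / C = N / C by rewrite -PE -CE quotientMidr.
have minPC : minnormal (P / C) (G / C).
  by rewrite PCE; apply: minnormal_quotient => //; rewrite setIC.
have cardPC : #|P / C| = #|N|.
  by rewrite PCE -(card_isog (quotient_isog (subset_trans sNG nCG) tiCN)).
apply: (core_contra (L := (L / C)%G) (Q := (Q / C)%G) indt qreg pr_p _ minPC _ _ _ _ _ _ _ tauS sSM Fs).
- exact: quotient_pgroup.
- exact: quotientS.
- by rewrite cardPC.
- by rewrite quotient_maximal.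
- by rewrite -quotientGI // -/D -CE trivg_quotient.
- by rewrite quotient_maximal.
- by apply: quotient_pHall => //; apply: subset_trans sQG nCG.
- apply: quotient_norms; rewrite ME normsM //.
  by apply: subset_trans sQG nDG.
Qed.
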